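(* Let $\Phi$ satisfy (C.1)--(C.3). Any crossover design which is $\phi_1$-optimal for $\Phi$ under the model with independent homoscedastic errors is still $\phi_1$-optimal for the same $\Phi$ when the within-subject covariance matrix of the errors is of the form $\Sigma=I_p+\eta1_p'+1_p\eta'$ for an arbitrary vector $\eta\in\mathbb R^p$ (in particular for compound symmetry $\Sigma=I_p+bJ_p$, $b\in\mathbb R$).
   Context: A crossover design $d$ with $p$ periods, $t$ treatments, $n$ subjects assigns treatment $d(k,u)$ to subject $u$ in period $k$; responses follow $Y_d=1_{np}\mu+Z\pi+U\varsigma+T_d\tau+F_d\gamma+\varepsilon$, with $Z=1_n\otimes I_p$, $U=I_n\otimes1_p$, $T_d$ the treatment incidence matrix and $F_d$ the carryover incidence matrix (rows ordered by subject then period; carryover row in period 1 is zero). Dropout: $l_u\in\{1,\dots,p\}$ is the number of periods subject $u$ stays (no re-entry), $l_1,\dots,l_n$ i.i.d. with $P(l_u=k)=a_k$, independent of design and outcomes; only the first $l_u$ responses of subject $u$ are observed. $I^k_{ij}$ is the $i\times j$ matrix with $I_k$ in its upper-left block, zeros elsewhere; $M=\mathrm{diag}(I^{l_1}_{l_1p},\dots,I^{l_n}_{l_np})$; $\mathrm{pr}^\perp(G)=I-G(G'G)^-G'$. The within-subject error covariance is a positive definite $p\times p$ matrix $\Sigma$ (errors of distinct subjects independent); $\Sigma_k$ is its upper-left $k\times k$ submatrix and $W=\mathrm{diag}(\Sigma_{l_1}^{-1},\dots,\Sigma_{l_n}^{-1})$. Define $O_\Sigma=M'W^{1/2}\mathrm{pr}^\perp([W^{1/2}MZ|W^{1/2}MU])W^{1/2}M$,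 $C_{d11}(l)=T_d'O_\Sigma T_d$, $C_{d12}(l)=T_d'O_\Sigma F_d=C_{d21}(l)'$, $C_{d22}(l)=F_d'O_\Sigma F_d$, $C_{dij}=\mathbb E\,C_{dij}(l)$ and $C_d=C_{d11}-C_{d12}C_{d22}^-C_{d21}$; the homoscedastic model is $\Sigma=I_p$. A criterion $\Phi$ is a real function on $t\times t$ nonnegative definite matrices with (C.1) concave, (C.2) $\Phi(S'CS)=\Phi(C)$ for permutation matrices $S$, (C.3) $b\mapsto\Phi(bC)$ nondecreasing on $b>0$. $\phi_1(d)=\Phi(C_d)$; a design is $\phi_1$-optimal if it maximizes $\phi_1$ over all designs with the same $p,t,n$ and dropout distribution. *)

(* Defs.v *)
From HB Require Import structures.
From mathcomp Require Import all_boot all_order all_algebra all_fingroup.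
From mathcomp Require Import reals.
From Stdlib Require Import ClassicalEpsilon.
Set Implicit Arguments. Unset Strict Implicit. Unset Printing Implicit Defensive.
Import Order.TTheory GRing.Theory Num.Theory.
Local Open Scope ring_scope.

Section Crossover.
Variable R : realType.

Definition nnd m (A : 'M[R]_m) : Prop :=
  A^T = A /\ forall x : 'rV[R]_m, 0 <= (x *m A *m x^T) 0 0.
Definition posdef m (A : 'M[R]_m) : Prop :=
  A^T = A /\ forall x : 'rV[R]_m, x != 0 -> 0 < (x *m A *m x^T) 0 0.

(* the (symmetric nonnegative definite) square root A^{1/2}; chosen by
   classical choice, it is the unique such matrix whenever A is nnd *)
Definition msqrt m (A : 'M[R]_m) : 'M[R]_m :=
  epsilon (inhabits 0) (fun S : 'M[R]_m => nnd S /\ S *m S = A).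

(* generalized inverse: MathComp's pinvmx satisfies A A^- A = A *)
Definition ginv m k (A : 'M[R]_(m, k)) : 'M[R]_(k, m) := pinvmx A.

Definition prperp m k (G : 'M[R]_(m, k)) : 'M[R]_m :=
  1%:M - G *m ginv (G^T *m G) *m G^T.

(* a design: d u k = treatment of subject u in period k *)
Definition design (n p t : nat) := 'I_n -> 'I_p -> 'I_t.

(* observations are ordered by subject then period: row dimension
   np := \sum_(u < n) p  (= n * p), block u = the p periods of subject u *)
Definition Zmat (n p : nat) : 'M[R]_(\sum_(u < n) p, p) :=
  \mxcol_(u < n) (1%:M : 'M[R]_p).
Definition Umat (n p : nat) : 'M[R]_(\sum_(u < n) p, n) :=
  \mxcol_(u < n) (\matrix_(k < p, v < n) ((u == v)%:R : R)).
Definition Tmat (n p t : nat) (d : design n p t) : 'M[R]_(\sum_(u < n) p, t) :=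
  \mxcol_(u < n) (\matrix_(k < p, i < t) ((d u k == i)%:R : R)).
(* carryover: treatment of the previous period, zero row in period 1 *)
Definition Fmat (n p t : nat) (d : design n p t) : 'M[R]_(\sum_(u < n) p, t) :=
  \mxcol_(u < n) (\matrix_(k < p, i < t)
     (([exists j : 'I_p, (j.+1 == k :> nat) && (d u j == i)])%:R : R)).

(* dropout vector l : l u = number of periods subject u stays (in 1..p) *)
Definition dropvec (n p : nat) := {ffun 'I_n -> 'I_p.+1}.

Definition Mmat (n p : nat) (l : dropvec n p) :
  'M[R]_(\sum_(u < n) (l u : nat), \sum_(u < n) p) :=
  \mxblock_(u < n, v < n) (if u == v then pid_mx (l u) else 0).

Definition subSigma (p : nat) (S : 'M[R]_p) (k : 'I_p.+1) : 'M[R]_k :=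
  \matrix_(i < k, j < k)
     S (widen_ord (ltnSE (ltn_ord k)) i) (widen_ord (ltnSE (ltn_ord k)) j).

Definition Wmat (n p : nat) (S : 'M[R]_p) (l : dropvec n p) :
  'M[R]_(\sum_(u < n) (l u : nat)) :=
  \mxdiag_(u < n) invmx (subSigma S (l u)).

Definition Omat (n p : nat) (S : 'M[R]_p) (l : dropvec n p) :
  'M[R]_(\sum_(u < n) p) :=
  let Wh := msqrt (Wmat S l) in
  let M := Mmat l in
  (M^T *m Wh) *m prperp (row_mx (Wh *m M *m Zmat n p) (Wh *m M *m Umat n p))
    *m (Wh *m M).

Definition C11l n p t (S : 'M[R]_p) (d : design n p t) (l : dropvec n p) :=
  (Tmat d)^T *m Omat S l *m Tmat d.
Definition C12l n p t (S : 'M[R]_p) (d : design n p t) (l : dropvec n p) :=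
  (Tmat d)^T *m Omat S l *m Fmat d.
Definition C21l n p t (S : 'M[R]_p) (d : design n p t) (l : dropvec n p) :=
  (Fmat d)^T *m Omat S l *m Tmat d.
Definition C22l n p t (S : 'M[R]_p) (d : design n p t) (l : dropvec n p) :=
  (Fmat d)^T *m Omat S l *m Fmat d.

(* expectation over l_1,...,l_n i.i.d. with P(l_u = k) = a k, k = 1..p *)
Definition Edrop n p m1 m2 (a : 'I_p.+1 -> R)
  (X : dropvec n p -> 'M[R]_(m1, m2)) : 'M[R]_(m1, m2) :=
  \sum_(l : dropvec n p | [forall u, (0 < (l u : nat))%N])
     (\prod_(u < n) a (l u)) *: X l.

Definition dropout_dist (p : nat) (a : 'I_p.+1 -> R) : Prop :=
  (forall k, 0 <= a k) /\ \sum_(k < p.+1 | (0 < (k : nat))%N) a k = 1.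

Definition Cd n p t (S : 'M[R]_p) (a : 'I_p.+1 -> R) (d : design n p t) : 'M[R]_t :=
  Edrop a (C11l S d) -
  Edrop a (C12l S d) *m ginv (Edrop a (C22l S d)) *m Edrop a (C21l S d).

Definition crit_C1 t (Phi : 'M[R]_t -> R) : Prop :=
  forall (A B : 'M[R]_t) (lam : R), nnd A -> nnd B -> 0 <= lam <= 1 ->
    lam * Phi A + (1 - lam) * Phi B <= Phi (lam *: A + (1 - lam) *: B).
Definition crit_C2 t (Phi : 'M[R]_t -> R) : Prop :=
  forall (C : 'M[R]_t) (s : 'S_t), nnd C ->
    Phi ((perm_mx s)^T *m C *m perm_mx s) = Phi C.
Definition crit_C3 t (Phi : 'M[R]_t -> R) : Prop :=
  forall (C : 'M[R]_t) (b1 b2 : R), nnd C -> 0 < b1 -> b1 <= b2 ->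
    Phi (b1 *: C) <= Phi (b2 *: C).

Definition phi1 n p t (S : 'M[R]_p) (a : 'I_p.+1 -> R) (Phi : 'M[R]_t -> R)
  (d : design n p t) : R := Phi (Cd S a d).

Definition phi1_optimal n p t (S : 'M[R]_p) (a : 'I_p.+1 -> R)
  (Phi : 'M[R]_t -> R) (d : design n p t) : Prop :=
  forall d' : design n p t, phi1 S a Phi d' <= phi1 S a Phi d.

Definition SigmaEta p (eta : 'cV[R]_p) : 'M[R]_p :=
  1%:M + eta *m const_mx 1 + const_mx 1 *m eta^T.

End Crossover.

(* Main.v *)
Require Import Defs.
From HB Require Import structures.
From mathcomp Require Import all_boot all_order all_algebra all_fingroup.
From mathcomp Require Import reals.
Set Implicit Arguments. Unset Strict Implicit. Unset Printing Implicit Defensive.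
Import Order.TTheory GRing.Theory Num.Theory.
Local Open Scope ring_scope.
From Stdlib Require Import ClassicalEpsilon FunctionalExtensionality.
Section Core.
Variable R : realType.

Lemma quad_row N k (B : 'M[R]_(k, N)) (G : 'M[R]_(N,k)) j :
  (row j B *m col j G) 0 0 = (B *m G) j j.
Proof. by rewrite !mxE; apply: eq_bigr => i _; rewrite !mxE. Qed.

Lemma posdef_eq0 N (W : 'M[R]_N) k (G : 'M[R]_(N,k)) :
  (forall y : 'rV[R]_N, y != 0 -> 0 < (y *m W *m y^T) 0 0) ->
  G^T *m W *m G = 0 -> G = 0.
Proof.
move=> PD H; apply: trmx_inj; rewrite trmx0.
apply/row_matrixP => j; rewrite row0; apply/eqP; apply: contraT => nz.
have := PD _ nz; rewrite tr_row trmxK -row_mul quad_row H mxE ltxx.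
by [].
Qed.

Definition PD N (W : 'M[R]_N) :=
  forall y : 'rV[R]_N, y != 0 -> 0 < (y *m W *m y^T) 0 0.

Lemma ginvK m (A : 'M[R]_m) : A *m pinvmx A *m A = A.
Proof. by rewrite mulmxKpV. Qed.

Lemma gW N m (W : 'M[R]_N) (X : 'M[R]_(N, m)) : PD W ->
  X *m pinvmx (X^T *m W *m X) *m (X^T *m W *m X) = X.
Proof.
move=> pdW; set A := X^T *m W *m X; set G := pinvmx A.
have hA : A *m G *m A = A by apply: ginvK.
apply/eqP; rewrite -subr_eq0; apply/eqP.
set F := X *m G *m A - X.
have eF : F = X *m (G *m A - 1) by rewrite /F mulmxBr mulmx1 !mulmxA.
have h0 : X^T *m W *m F = 0.
  by rewrite /F mulmxBr mulmxA (mulmxA (X^T *m W) X G) -/A hA subrr.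
apply: (@posdef_eq0 _ W _ F pdW).
have -> : F^T *m W *m F = (G *m A - 1)^T *m (X^T *m W *m F).
  by rewrite {1}eF trmx_mul !mulmxA.
by rewrite h0 mulmx0.
Qed.

Lemma PD1 N : PD (1%:M : 'M[R]_N).
Proof.
move=> y nz; rewrite mulmx1 mxE.
case: (pickP (fun i => y 0 i != 0)) => [i yi|h]; last first.
  have y0 : y = 0.
    apply/rowP => j; rewrite mxE; apply/eqP; move: (h j) => /= /negbT; by rewrite negbK.
  by rewrite y0 eqxx in nz.
rewrite (bigD1 i) //= mxE.
apply: ltr_pwDl; first by rewrite -expr2 lt_def sqr_ge0 andbT sqrf_eq0 yi.
by apply: sumr_ge0 => j _; rewrite mxE -expr2 sqr_ge0.
Qed.

Lemma core N m k (X : 'M[R]_(N,m)) (W V : 'M[R]_N) (E : 'M[R]_(N,k))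
   (K : 'M[R]_(m,k)) :
  PD W -> W *m V = 1%:M ->
  V = 1%:M + E *m (X *m K)^T + (X *m K) *m E^T ->
  W - W *m X *m pinvmx (X^T *m W *m X) *m X^T *m W =
  1%:M - X *m pinvmx (X^T *m X) *m X^T.
Proof.
move=> pdW hWV hV.
have hG := gW X pdW.
have hH : X *m pinvmx (X^T *m X) *m (X^T *m X) = X.
  by have := gW X (@PD1 N); rewrite mulmx1.
move: (pinvmx (X^T *m W *m X)) hG => G hG.
move: (pinvmx (X^T *m X)) hH => H hH.
set Q := 1%:M - X *m H *m X^T.
have hQX : Q *m X = 0.
  by rewrite /Q mulmxBl mul1mx -(mulmxA (X *m H)) hH subrr.
have hsym : X *m H^T *m X^T = X *m H *m X^T.
  have h1 : X^T *m X *m H^T *m X^T = X^T.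
    by have := congr1 trmx hH; rewrite !trmx_mul trmxK !mulmxA.
  by rewrite -{2}h1 !mulmxA -(mulmxA (X *m H) X^T X) hH.
have hQT : Q^T = Q by rewrite /Q linearB /= trmx1 !trmx_mul trmxK mulmxA hsym.
have hXQ : X^T *m Q = 0 by rewrite -hQT -trmx_mul hQX trmx0.
set C := K *m E^T *m Q.
have hVQ : V *m Q = Q + X *m C.
  rewrite hV !mulmxDl mul1mx -addrA; congr (_ + _).
  rewrite trmx_mul -!mulmxA hXQ !mulmx0 add0r /C !mulmxA //.
have hQ : Q = W *m Q + W *m X *m C.
  by rewrite -mulmxA -mulmxDr -hVQ mulmxA hWV mul1mx.
have h1 : Q + X *m H *m X^T = 1%:M by rewrite /Q subrK.
clearbody Q.
have eW : W = W *m Q + W *m (X *m H *m X^T) by rewrite -mulmxDr h1 mulmx1.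
have hWQ : W - Q = W *m X *m (H *m X^T - C).
  rewrite {1}eW {2}hQ mulmxBr !mulmxA.
  by rewrite opprD addrACA subrr add0r.
have hXW : X^T *m W = X^T *m W *m X *m (H *m X^T - C).
  by rewrite -(mulmxA X^T) -(mulmxA X^T) -hWQ mulmxBr hXQ subr0.
have e : W *m X *m G *m (X^T *m W *m X) = W *m X.
  by rewrite -(mulmxA W X G) -(mulmxA W) hG.
have hfin : W *m X *m G *m X^T *m W = W - Q.
  by rewrite hWQ -(mulmxA (W *m X *m G)) hXW (mulmxA (W *m X *m G)) e.
by rewrite hfin opprB addrC subrK.
Qed.
End Core.
Section Blocks.
Variable R : realType.
Variables (n p : nat) (l : dropvec n p).

Local Notation M := (@Mmat R n p l).

Lemma lup (u : 'I_n) : (l u <= p)%N.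
Proof. by rewrite -ltnS ltn_ord. Qed.

Lemma MDMt (B_ : 'I_n -> 'M[R]_p) :
  M *m \mxdiag_(u < n) B_ u *m M^T =
  \mxdiag_(u < n) ((pid_mx (l u) : 'M_(l u, p)) *m B_ u *m pid_mx (l u)).
Proof.
rewrite /Mmat mul_mxblock_mxdiag tr_mxblock mul_mxblock /mxdiag.
apply/eq_mxblock => u w.
case: eqVneq => [<-|uw].
  rewrite conform_mx_id (bigD1 u) //= eqxx big1 ?addr0 ?tr_pid_mx //.
  by move=> v /negPf vu; rewrite eq_sym vu mul0mx mul0mx.
apply: big1 => v _; case: eqVneq => [<-|_]; last by rewrite !mul0mx.
by rewrite eq_sym (negPf uw) trmx0 mulmx0.
Qed.

Lemma MMt : M *m M^T = 1%:M.
Proof.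
have := MDMt (fun _ => 1%:M); rewrite (mxdiagZ (p_ := fun _ => p) 1) mulmx1 => ->.
rewrite -(mxdiagZ (p_ := fun u => (l u : nat)) 1); apply: eq_mxdiag => u.
by rewrite mulmx1 pid_mx_id ?lup // pid_mx_1.
Qed.


Lemma subSigmaE (S : 'M[R]_p) (k : 'I_p.+1) :
  subSigma S k = (pid_mx k : 'M_(k, p)) *m S *m pid_mx k.
Proof.
have hk : (k <= p)%N by rewrite -ltnS ltn_ord.
rewrite -[X in _ *m X](@tr_pid_mx R k p k) (@pid_mxErow R _ _ hk) mul_rowsub_mx mul1mx.
apply/matrixP => i j; rewrite !mxE (bigD1 (widen_ord hk j)) //= big1.
  rewrite !mxE eqxx mulr1 addr0; congr (S _ _); exact: val_inj.
move=> b nb; rewrite !mxE; case: eqP => [e|]; last by rewrite mulr0.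
by case/eqP: nb; apply: val_inj; rewrite /= -e.
Qed.

Definition Vblk (S : 'M[R]_p) := \mxdiag_(u < n) subSigma S (l u).

Lemma VblkE (S : 'M[R]_p) : Vblk S = M *m \mxdiag_(u < n) S *m M^T.
Proof. by rewrite MDMt; apply: eq_mxdiag => u; rewrite subSigmaE. Qed.


Definition Ecol (eta : 'cV[R]_p) : 'M[R]_(\sum_(u < n) p, n) :=
  \mxcol_(u < n) (\matrix_(k < p, v < n) ((u == v)%:R * eta k 0)).

Lemma sumdelta (u w : 'I_n) (c : R) :
  \sum_(v < n) ((u == v)%:R * c) * (w == v)%:R = (u == w)%:R * c.
Proof.
rewrite (bigD1 u) //= big1 => [|v vu]; last by rewrite eq_sym (negPf vu) !mul0r.
by rewrite eqxx mul1r addr0 eq_sym mulrC.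
Qed.

Lemma SbigE (eta : 'cV[R]_p) :
  \mxdiag_(u < n) SigmaEta eta =
  1%:M + Ecol eta *m (Umat R n p)^T + Umat R n p *m (Ecol eta)^T.
Proof.
rewrite /Umat /Ecol !tr_mxcol !mul_mxcol_mxrow.
rewrite -(mxdiagZ (p_ := fun _ => p) 1) /mxdiag -!mxblockD.
apply/eq_mxblock => u w; apply/matrixP => i j.
rewrite !mxE.
under eq_bigr do rewrite !mxE.
under [X in _ = _ + _ + X]eq_bigr do rewrite !mxE mulrC.
rewrite !sumdelta [(w == u)%:R * _]mulrC eq_sym.

case: (eqVneq w u) => [_|uw]; last by rewrite mxE !mul0r mulr0 !addr0.
rewrite !conform_mx_id /SigmaEta !mxE !big_ord1 !mxE !mulr1 mul1r.
by rewrite mul1r.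
Qed.

End Blocks.

Section Blocks2.
Variable R : realType.

Lemma PD_unit k (A : 'M[R]_k) : PD A -> A \in unitmx.
Proof.
move=> pdA; rewrite -row_free_unit; apply: contraT => nf.
have kn : kermx A != 0.
  by rewrite -mxrank_eq0 mxrank_ker subn_eq0 -ltnNge ltn_neqAle rank_leq_row andbT.
have : [exists i, row i (kermx A) != 0].
  apply: contraNT kn; rewrite negb_exists => /forallP h.
  apply/eqP/row_matrixP => i; rewrite row0; apply/eqP; move: (h i); by rewrite negbK.
case/existsP => i ni.
by have := pdA _ ni; rewrite -row_mul mulmx_ker row0 mul0mx mxE ltxx.
Qed.

Lemma PD_ge0 k (S : 'M[R]_k) : PD S -> forall x : 'rV[R]_k, 0 <= (x *m S *m x^T) 0 0.
Proof.
move=> pdS x; case: (eqVneq x 0) => [->|nx]; last exact: ltW (pdS _ nx).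
by rewrite !mul0mx mxE.
Qed.

Lemma PD_diag n p (S : 'M[R]_p) : PD S -> PD (\mxdiag_(u < n) S).
Proof.
move=> pdS y ny.
have ey : y = \mxrow_(u < n) (submxrow y u : 'rV_p) by rewrite submxrowK.
rewrite ey mul_mxrow_mxdiag tr_mxrow mul_mxrow_mxcol summxE.
have : [exists u, (submxrow y u : 'rV_p) != 0].
  apply: contraNT ny; rewrite negb_exists => /forallP h.
  rewrite ey; apply/eqP; rewrite -(mxrow0 (q_ := fun _ => p)); apply: eq_mxrow => u.
  by apply/eqP; move: (h u); rewrite negbK.
case/existsP => u nu; rewrite (bigD1 u) //=.
apply: ltr_pwDl; first exact: pdS.
by apply: sumr_ge0 => v _; apply: PD_ge0.
Qed.

Lemma PD_sub p (S : 'M[R]_p) (k : 'I_p.+1) : PD S -> PD (subSigma S k).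
Proof.
move=> pdS y ny; rewrite subSigmaE.
have hk : (k <= p)%N by rewrite -ltnS ltn_ord.
have -> : y *m (pid_mx k *m S *m pid_mx k) *m y^T =
          (y *m (pid_mx k : 'M_(k,p))) *m S *m (y *m (pid_mx k : 'M_(k,p)))^T.
  by rewrite trmx_mul tr_pid_mx !mulmxA.
apply: pdS; apply: contraNneq ny => e.
by have := congr1 (mulmx^~ (pid_mx k : 'M_(p,k))) e; rewrite -mulmxA pid_mx_id // pid_mx_1 mulmx1 mul0mx => ->.
Qed.

Section L.
Variables (n p : nat) (l : dropvec n p).
Local Notation M := (Mmat R l).

Lemma PD_Vblk (S : 'M[R]_p) : PD S -> PD (Vblk l S).
Proof.
move=> pdS y ny; rewrite VblkE.
have -> : y *m (M *m \mxdiag_(u < n) S *m M^T) *m y^T =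
   (y *m M) *m \mxdiag_(u < n) S *m (y *m M)^T by rewrite trmx_mul !mulmxA.
apply: (@PD_diag n _ _ pdS (y *m M)); apply: contraNneq ny => e.
by have := congr1 (mulmx^~ M^T) e; rewrite -mulmxA MMt mulmx1 mul0mx => ->.
Qed.

Lemma mxdiagM k (p_ : 'I_k -> nat) (A B : forall i, 'M[R]_(p_ i)) :
  \mxdiag_i A i *m \mxdiag_i B i = \mxdiag_i (A i *m B i).
Proof.
rewrite {1}/mxdiag mul_mxblock_mxdiag /mxdiag; apply/eq_mxblock => u w.
by case: eqVneq => [<-|_]; rewrite ?conform_mx_id ?mul0mx.
Qed.

Lemma WV (S : 'M[R]_p) : PD S -> Wmat S l *m Vblk l S = 1%:M.
Proof.
move=> pdS; rewrite /Wmat /Vblk mxdiagM.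
rewrite -(mxdiagZ (p_ := fun u => (l u : nat)) 1); apply: eq_mxdiag => u.
rewrite mulVmx //; apply: PD_unit; exact: PD_sub.
Qed.

Lemma Wsym (S : 'M[R]_p) : S^T = S -> (Wmat S l)^T = Wmat S l.
Proof.
move=> sS; rewrite /Wmat tr_mxdiag; apply: eq_mxdiag => u.
rewrite trmx_inv; congr invmx; apply/matrixP => i j; rewrite !mxE.
by rewrite -{1}sS mxE.
Qed.

Lemma PD_W (S : 'M[R]_p) : PD S -> S^T = S -> PD (Wmat S l).
Proof.
move=> pdS sS y ny.
set W := Wmat S l; set V := Vblk l S.
have hWV : W *m V = 1%:M by apply: WV.
have -> : y *m W *m y^T = (y *m W) *m V *m (y *m W)^T.
  by rewrite trmx_mul Wsym // -(mulmxA y W V) hWV mulmx1 mulmxA.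
apply: PD_Vblk => //; apply: contraNneq ny => e.
by have := congr1 (mulmx^~ V) e; rewrite -mulmxA hWV mulmx1 mul0mx => ->.
Qed.

End L.
End Blocks2.

From mathcomp Require Import complex spectral sesquilinear.
Import Num.Def.

Section Sqrt.
Variable R : realType.
Local Notation C := (R[i]).
Local Notation toC := (real_complex R).

Lemma interp (F : R -> R) (s : seq R) :
  exists p : {poly R}, forall x, x \in s -> p.[x] = F x.
Proof.
elim: s => [|a s [p hp]]; first by exists 0.
case: (boolP (a \in s)) => ias.
  by exists p => x; rewrite inE => /orP [/eqP -> |]; [apply: hp | apply: hp].
pose c := \prod_(b <- s) (a - b).
have cnz : c != 0.
  rewrite /c prodf_seq_neq0; apply/allP => b bs /=; rewrite subr_eq0.
  by apply: contraNneq ias => ->.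
exists (p + ((F a - p.[a]) / c) *: \prod_(b <- s) ('X - b%:P)) => x.
rewrite inE hornerD hornerZ horner_prod => /orP [/eqP -> | xs].
  have -> : \prod_(b <- s) ('X - b%:P).[a] = c.
    by apply: eq_bigr => b _; rewrite hornerXsubC.
  by rewrite divfK // addrC subrK.
have -> : \prod_(b <- s) ('X - b%:P).[x] = 0.
  by apply/eqP; rewrite prodf_seq_eq0; apply/hasP; exists x => //=; rewrite hornerXsubC subrr.
by rewrite mulr0 addr0 hp.
Qed.

Lemma conj_toC (x : R) : (toC x)^* = toC x.
Proof. by apply: conj_Creal; rewrite complex_real. Qed.

Local Open Scope sesquilinear_scope.
Local Notation mC := (map_mx toC).

Lemma cquad n (A : 'M[R]_n) : A^T = A ->
  (forall x : 'rV[R]_n, 0 <= (x *m A *m x^T) 0 0) ->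
  forall v : 'rV[C]_n, 0 <= (v *m mC A *m v^t*) 0 0.
Proof.
move=> sA nA v.
set a0 := map_mx (@Re R) v; set b0 := map_mx (@Im R) v.
have hv : v = mC a0 + 'i *: mC b0.
  apply/rowP => j; rewrite !mxE -complexiE; exact: complexE.
have hvc : v^t* = (mC a0)^T - 'i *: (mC b0)^T.
  apply/matrixP => i j; rewrite !mxE {1}[v j i]complexE rmorphD rmorphM /=.
  by rewrite !conj_toC -complexiE conjCi mulNr.
have sym : forall x y : 'rV[R]_n, mC x *m mC A *m (mC y)^T = mC y *m mC A *m (mC x)^T.
  move=> x y; rewrite !map_trmx -!map_mxM.
  have t1 : forall M : 'M[R]_1, M^T = M by move=> M; apply/matrixP => i j; rewrite mxE !ord1.
  suff -> : x *m A *m y^T = y *m A *m x^T by [].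
  by rewrite -[X in X = _]t1 !trmx_mul trmxK sA mulmxA.
have qR : forall x : 'rV[R]_n, mC x *m mC A *m (mC x)^T = mC (x *m A *m x^T).
  by move=> x; rewrite !map_trmx -!map_mxM.
rewrite hvc {1}hv !mulmxDl !mulmxBr -!scalemxAl -!scalemxAr.
rewrite (sym b0 a0) addrA subrK scalerA -expr2 sqrCi scaleN1r opprK !qR.
by rewrite -map_mxD mxE ler0c mxE addr_ge0.
Qed.


Lemma horner_mx_tr n (A : 'M[R]_n.+1) p : (horner_mx A p)^T = horner_mx A^T p.
Proof.
elim/poly_ind: p => [|p c IH]; first by rewrite !rmorph0 trmx0.
rewrite !rmorphD !rmorphM /= !horner_mx_X !horner_mx_C.
rewrite -!mulmxE linearD /= tr_scalar_mx trmx_mul IH; congr (_ + _).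
by have := @comm_mx_horner _ _ A^T A^T p erefl.
Qed.

Lemma rowq n (P M : 'M[C]_n) j :
  (P *m M *m P^t*) j j = (row j P *m M *m (row j P)^t*) 0 0.
Proof. by rewrite !mxE; apply: eq_bigr => k _; rewrite !mxE; congr (_ * _); apply: eq_bigr => l _; rewrite !mxE. Qed.

Lemma sqrt_ex n (A : 'M[R]_n.+1) : A^T = A ->
  (forall x : 'rV[R]_n.+1, 0 <= (x *m A *m x^T) 0 0) ->
  exists S : 'M[R]_n.+1, [/\ S^T = S,
    (forall x : 'rV[R]_n.+1, 0 <= (x *m S *m x^T) 0 0) & S *m S = A].
Proof.
move=> sA nA.
set Ac := mC A.
have herm : Ac \is hermsymmx.
  rewrite is_hermitianmxE expr0 scale1r; apply/eqP/matrixP => i j.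
  by rewrite !mxE conj_toC -{1}sA mxE.
have Aeq : Ac = invmx (spectralmx Ac) *m diag_mx (spectral_diag Ac) *m spectralmx Ac.
  by apply/orthomx_spectralP; apply: hermitian_normalmx.
move: Aeq; set P := spectralmx Ac; set d := spectral_diag Ac => Aeq.
have Pu : P \is unitarymx := spectral_unitarymx Ac.
have Punit : P \in unitmx := spectral_unit Ac.
have iP : invmx P = P^t* := invmx_unitary Pu.
have PPt : P *m P^t* = 1%:M := unitarymxP Pu.
have dr : d \is a realmx := hermitian_spectral_diag_real herm.
set r := map_mx (@Re R) d.
have hd : forall j, d 0 j = toC (r 0 j).
  by move=> j; rewrite mxE RRe_real //; exact: (mxOverP dr 0 j).
have r0 : forall j, 0 <= r 0 j.
  move=> j; rewrite -ler0c -hd.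
  have e1 : P *m Ac *m P^t* = diag_mx d.
    rewrite Aeq iP !mulmxA PPt mul1mx -mulmxA PPt mulmx1 //.
  have := rowq P Ac j; rewrite e1 mxE eqxx mulr1n => ->.
  exact: cquad.
have [p hp] := interp Num.sqrt [seq r 0 j | j <- enum 'I_n.+1].
set S := horner_mx A p.
set s := \row_j toC (Num.sqrt (r 0 j)).
have Sc : mC S = P^t* *m diag_mx s *m P.
  rewrite map_horner_mx -/Ac Aeq horner_mx_uconjC // horner_mx_diag iP.
  congr (_ *m diag_mx _ *m _); apply/rowP => j; rewrite !mxE hd horner_map hp //.
  by apply: map_f; rewrite mem_enum.
exists S; split.
- by rewrite horner_mx_tr sA.
- move=> x; rewrite -ler0c.
  have -> : toC ((x *m S *m x^T) 0 0) = (mC x *m mC S *m (mC x)^t*) 0 0.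
    have ht : (mC x)^t* = mC x^T by apply/matrixP => i j; rewrite !mxE conj_toC.
    by rewrite ht -!map_mxM [RHS]mxE.
  rewrite Sc !mulmxA.
  set w := mC x *m P^t*.
  have hw : mC x *m P^t* *m diag_mx s *m P *m (mC x)^t* = w *m diag_mx s *m w^t*.
    by rewrite /w trmx_mul map_mxM trmxCK !mulmxA.
  rewrite hw mul_mx_diag !mxE; apply: sumr_ge0 => j _; rewrite !mxE mulrAC.
  apply: mulr_ge0; first exact: mul_conjC_ge0.
  by rewrite ler0c sqrtr_ge0.
- apply: (@map_mx_inj _ _ toC); rewrite map_mxM Sc -/Ac Aeq iP.
  rewrite -!mulmxA (mulmxA P) PPt mul1mx (mulmxA (diag_mx s)) mulmx_diag !mulmxA; congr (_ *m diag_mx _ *m _).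
  apply/rowP => j; rewrite !mxE hd -rmorphM -expr2 sqr_sqrtr //.
exact: r0.
Qed.

End Sqrt.

Lemma msqrt_spec (R : realType) k (A : 'M[R]_k) : A^T = A ->
  (forall x : 'rV[R]_k, 0 <= (x *m A *m x^T) 0 0) ->
  nnd (msqrt A) /\ msqrt A *m msqrt A = A.
Proof.
move=> sA nA; rewrite /msqrt; apply: (epsilon_spec (inhabits 0) (fun S : 'M[R]_k => nnd S /\ S *m S = A)).
case: k A sA nA => [|k] A sA nA.
  exists A; split; first by split => // x; rewrite mxE big_ord0.
  by apply/matrixP => -[].
by have [S [sS nS SS]] := sqrt_ex sA nA; exists S.
Qed.

Section Fin.
Variable R : realType.
Variables (n p : nat) (l : dropvec n p).
Local Notation M := (Mmat R l).
Local Notation X := (Mmat R l *m row_mx (Zmat R n p) (Umat R n p)).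

Lemma Omat_eq (eta : 'cV[R]_p) : posdef (SigmaEta eta) ->
  Omat (SigmaEta eta) l = M^T *m (1%:M - X *m pinvmx (X^T *m X) *m X^T) *m M.
Proof.
case=> sS pdS.
set S := SigmaEta eta.
set W := Wmat S l.
have pdW : PD W := PD_W pdS sS.
have hWV : W *m Vblk l S = 1%:M := WV l pdS.
set K : 'M[R]_(p + n, n) := col_mx 0 1%:M.
have hXK : X *m K = M *m Umat R n p by rewrite -mulmxA mul_row_col mulmx0 add0r mulmx1.
have hV : Vblk l S = 1%:M + (M *m Ecol n eta) *m (X *m K)^T + (X *m K) *m (M *m Ecol n eta)^T.
  rewrite VblkE SbigE hXK !mulmxDr !mulmxDl mulmx1 MMt !trmx_mul !mulmxA //.
have [[sWh nWh] WhWh] := msqrt_spec (Wsym l sS) (PD_ge0 pdW).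
rewrite /Omat /= -/W.
set Wh := msqrt W.
rewrite -(core pdW hWV hV).
have sWh' : Wh^T = Wh := sWh.
have WhWh' : Wh *m Wh = W := WhWh.
rewrite -mul_mx_row -(mulmxA Wh M) /prperp /ginv.
have eG : (Wh *m X)^T *m (Wh *m X) = X^T *m W *m X.
  by rewrite trmx_mul sWh' (mulmxA (X^T *m Wh) Wh X) -(mulmxA X^T Wh Wh) WhWh'.
rewrite eG; move: (pinvmx (X^T *m W *m X)) => G.
rewrite -WhWh' trmx_mul sWh' !mulmxBr !mulmxBl !mulmx1 !mulmxA.
by [].
Qed.

Lemma O_indep (eta : 'cV[R]_p) : posdef (SigmaEta eta) ->
  Omat (SigmaEta eta) l = Omat 1%:M l.
Proof.
move=> pd; rewrite Omat_eq //.
have e0 : SigmaEta (0 : 'cV[R]_p) = 1%:M.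
  by rewrite /SigmaEta !mul0mx trmx0 mulmx0 !addr0.
rewrite -e0 Omat_eq // e0; split; first exact: trmx1.
exact: PD1.
Qed.
End Fin.

Theorem corollary2p1 (R : realType) (n p t : nat) (a : 'I_p.+1 -> R)
  (Phi : 'M[R]_t -> R) (eta : 'cV[R]_p) (d : design n p t) :
  dropout_dist a ->
  crit_C1 Phi -> crit_C2 Phi -> crit_C3 Phi ->
  posdef (SigmaEta eta) ->
  phi1_optimal 1%:M a Phi d ->
  phi1_optimal (SigmaEta eta) a Phi d.
Proof.
move=> _ _ _ _ pd opt.
have hC : forall d0 : design n p t, Cd (SigmaEta eta) a d0 = Cd 1%:M a d0.
  move=> d0.
  have h1 : C11l (SigmaEta eta) d0 = C11l 1%:M d0.
    by apply: functional_extensionality => l; rewrite /C11l O_indep.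
  have h2 : C12l (SigmaEta eta) d0 = C12l 1%:M d0.
    by apply: functional_extensionality => l; rewrite /C12l O_indep.
  have h3 : C21l (SigmaEta eta) d0 = C21l 1%:M d0.
    by apply: functional_extensionality => l; rewrite /C21l O_indep.
  have h4 : C22l (SigmaEta eta) d0 = C22l 1%:M d0.
    by apply: functional_extensionality => l; rewrite /C22l O_indep.
  by rewrite /Cd h1 h2 h3 h4.
by move=> d'; rewrite /phi1 !hC; apply: opt.
Qed.
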